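(* Let $H$ be a Banach space and $S(t):H\to H$, $t\ge0$, a semigroup ($S(t+l)=S(t)\circ S(l)$, $S(0)=\mathrm{Id}$) which is dissipative and possesses a global attractor $\mathcal{A}$ in $H$. Assume that every trajectory $u(t)=S(t)u_0$ belongs to $C_{loc}(\mathbb{R}_+,H)$ and that the map $u_0\mapsto S(\cdot)u_0$ is continuous from $H$ to $C_{loc}(\mathbb{R}_+,H)$. Then every system $\{F_1,\dots,F_N\}$ of continuous functionals $F_i:H\to\mathbb{R}$ which is separating on the attractor $\mathcal{A}$ is asymptotically determining.
   Context: Dissipative means: there exist constants $C,\alpha>0$ and a monotone increasing function $Q$ such that $\|S(t)u_0\|_H\le Q(\|u_0\|_H)e^{-\alpha t}+C$ for all $u_0\in H$, $t\ge0$. A set $\mathcal{A}\subset H$ is a global attractor if it is compact, strictly invariant ($S(t)\mathcal{A}=\mathcal{A}$ for all $t\ge0$), and for every bounded $B\subset H$ and every neighbourhood $\mathcal{O}$ of $\mathcal{A}$ there is $T$ with $S(t)B\subset\mathcal{O}$ for $t\ge T$. A complete trajectory belonging to the attractor is a map $u:\mathbb{R}\to\mathcal{A}$ with $S(t)u(s)=u(t+s)$ for all $s\in\mathbb{R}$, $t\ge0$. A system $\{F_1,\dots,F_N\}$ is separating on $\mathcal{A}$ if for any two complete trajectories $u,v$ belonging to $\mathcal{A}$, $F_i(u(t))=F_i(v(t))$ for all $t\in\mathbb{R}$ and all $i$ implies $u\equiv v$. It is asymptotically determining if for any two trajectories $u(t)=S(t)u_0$, $v(t)=S(t)v_0$,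 $\lim_{t\to\infty}(F_i(u(t))-F_i(v(t)))=0$ for all $i$ implies $\lim_{t\to\infty}\|u(t)-v(t)\|_H=0$. *)

(* Defs.v *)
From HB Require Import structures.
From mathcomp Require Import all_boot all_order all_algebra.
From mathcomp Require Import all_classical all_reals all_analysis.
Set Implicit Arguments. Unset Strict Implicit. Unset Printing Implicit Defensive.
Import Order.TTheory GRing.Theory Num.Theory.
Import numFieldNormedType.Exports.
Local Open Scope classical_set_scope.
Local Open Scope ring_scope.

Section Defs.
Context {R : realType} {H : completeNormedModType R}.

Definition is_semigroup (S : R -> H -> H) : Prop :=
  (forall u, S 0 u = u) /\
  (forall t l, 0 <= t -> 0 <= l -> forall u, S (t + l) u = S t (S l u)).

Definition dissipative (S : R -> H -> H) : Prop :=
  exists (C alpha : R) (Q : R -> R),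
    0 < C /\ 0 < alpha /\ (forall a b, a <= b -> Q a <= Q b) /\
    forall u0 t, 0 <= t -> `|S t u0| <= Q `|u0| * expR (- (alpha * t)) + C.

Definition bounded_subset (B : set H) : Prop :=
  exists M : R, forall x, B x -> `|x| <= M.

Definition set_nbhs (A O : set H) : Prop :=
  exists U : set H, open U /\ A `<=` U /\ U `<=` O.

Definition global_attractor (S : R -> H -> H) (A : set H) : Prop :=
  compact A /\
  (forall t, 0 <= t -> S t @` A = A) /\
  (forall B O, bounded_subset B -> set_nbhs A O ->
     exists T : R, forall t, T <= t -> S t @` B `<=` O).

Definition complete_traj (S : R -> H -> H) (A : set H) (u : R -> H) : Prop :=
  (forall s, A (u s)) /\ (forall s t, 0 <= t -> S t (u s) = u (t + s)).

Definition trajectories_continuous (S : R -> H -> H) : Prop :=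
  forall u0, {within [set t : R | 0 <= t], continuous (fun t => S t u0)}.

(* u0 |-> S(.)u0 continuous H -> C_loc(R_+,H): topology of uniform
   convergence on compact subsets of R_+, i.e. on every [0,T] *)
Definition Cloc_continuous (S : R -> H -> H) : Prop :=
  forall u0 (T eps : R), 0 <= T -> 0 < eps ->
    exists2 delta : R, 0 < delta &
      forall v0, `|u0 - v0| < delta ->
        forall t, 0 <= t <= T -> `|S t u0 - S t v0| < eps.

Definition separating (S : R -> H -> H) (A : set H) (N : nat)
    (F : 'I_N -> H -> R) : Prop :=
  forall u v, complete_traj S A u -> complete_traj S A v ->
    (forall t i, F i (u t) = F i (v t)) -> u = v.

Definition asymptotically_determining (S : R -> H -> H) (N : nat)
    (F : 'I_N -> H -> R) : Prop :=
  forall u0 v0,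
    (forall i, (F i (S t u0) - F i (S t v0)) @[t --> +oo] --> (0 : R)) ->
    `|S t u0 - S t v0| @[t --> +oo] --> (0 : R).

End Defs.

(* Main.v *)
Require Import Defs.
From HB Require Import structures.
From mathcomp Require Import all_boot all_order all_algebra.
From mathcomp Require Import all_classical all_reals all_analysis.
Import Order.TTheory GRing.Theory Num.Theory.
Import numFieldNormedType.Exports.
Local Open Scope classical_set_scope.
Local Open Scope ring_scope.

Lemma shadow_cluster (R : realType) (T : pseudoMetricType R) (K : set T)
  (G : set_system T) :
  compact K -> ProperFilter G ->
  (forall e : R, 0 < e -> G [set y | exists2 k, K k & ball k e y]) ->
  exists2 p, K p & cluster G p.
Proof.
move=> cK PG hG.
pose D := [set Pe : set T * R | G Pe.1 /\ 0 < Pe.2].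
pose B := fun Pe : set T * R =>
  [set k | K k /\ exists2 y, Pe.1 y & ball k Pe.2 y].
have FF : Filter (filter_from D B).
  apply: filter_from_filter.
    by exists (setT, 1); split; [exact: filterT | exact: ltr01].
  move=> [P1 e1] [P2 e2] [/= G1 e1p] [/= G2 e2p].
  exists (P1 `&` P2, Order.min e1 e2).
    by split => /=; [exact: filterI | rewrite lt_min e1p e2p].
  move=> k [Kk [y [P1y P2y] bky]]; split; split => //; exists y => //;
    apply: le_ball bky; rewrite ge_min lexx ?orbT //.
have PF : ProperFilter (filter_from D B).
  apply: filter_from_proper => // -[P e] [/= GP ep].
  have [y [Py [k Kk bky]]] := filter_ex (filterI GP (hG e ep)).
  by exists k; split => //; exists y.
have FK : filter_from D B K.
  by exists (setT, 1); [split; [exact: filterT | exact: ltr01] | move=> k []].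
have [p [Kp cp]] := cK _ PF FK.
exists p => // P Q GP /nbhs_ballP [r rp brQ].
have r2 : 0 < r / 2 by rewrite divr_gt0.
have [k [[Kk [y Py bky]] bpk]] := cp (B (P, r/2)) (ball p (r/2))
  (ex_intro2 _ _ (P, r/2) (conj GP r2) (fun x h => h)) (nbhsx_ballx p (r/2) r2).
exists y; split => //; apply: brQ.
by rewrite [r](splitr r); exact: ball_triangle bpk bky.
Qed.

Lemma ultra_cluster_cvg (I : Type) (T : topologicalType) (U : set_system I)
  (f : I -> T) p : UltraFilter U -> cluster (f @ U) p -> f @ U --> p.
Proof.
move=> UU cp B nB.
case: (in_ultra_setVsetC (f @^-1` B) UU) => // hC.
by have [x [Cx Bx]] := cp (~` B) B hC nB.
Qed.
Theorem proposition2p3 (R : realType) (H : completeNormedModType R)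
    (S : R -> H -> H) (A : set H) :
  is_semigroup S -> dissipative S -> global_attractor S A ->
  trajectories_continuous S -> Cloc_continuous S ->
  forall (N : nat) (F : 'I_N -> H -> R),
    (forall i, continuous (F i)) ->
    separating S A F -> asymptotically_determining S F.
Proof.
move=> [_ Ssg] _ [cA [_ attr]] _ Sc N F Fc sep u0 v0 hF.
apply/cvgrPdist_lt => e e0.
have [//|hne] := pselect (\forall t \near +oo, `|0 - `|S t u0 - S t v0| | < e).
exfalso.
have hex : forall M : R, exists t, M < t /\ e <= `|S t u0 - S t v0|.
  move=> M; apply: contrapT => H0; apply: hne; exists M; split; first exact: num_real.
  move=> x Mx; rewrite sub0r normrN normr_id ltNge; apply/negP => hx.
  by apply: H0; exists x.
pose G0 := filter_from [set M : R | True]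
  (fun M => [set t | M < t /\ e <= `|S t u0 - S t v0|]).
have FG0 : Filter G0.
  apply: filter_from_filter; first by exists 0.
  move=> M1 M2 _ _; exists (Order.max M1 M2) => //.
  by move=> t [/=]; rewrite gt_max => /andP[h1 h2] h; split.
have PG0 : ProperFilter G0.
  apply: filter_from_proper => // M _; have [t ht] := hex M; by exists t.
have [U [UU G0U]] := ultraFilterLemma PG0.
have PU : ProperFilter U := @ultra_proper _ _ UU.
have Uinf : forall M, U [set t | M < t].
  by move=> M; apply: G0U; exists M => // t [].
have Ushift : forall s M, U [set t | M < t + s].
  move=> s M; apply: filterS (Uinf (M - s)) => t /=.
  by rewrite ltrBlDr.
have conv : forall w0 s, exists p, A p /\
    (fun t => S (t + s) w0) @ U --> p.
  move=> w0 s.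
  suff [p Ap cp] : exists2 p, A p & cluster ((fun t => S (t + s) w0) @ U) p.
    by exists p; split => //; exact: ultra_cluster_cvg.
  apply: (@shadow_cluster _ _ A _ cA (fmap_proper_filter (fun t => S (t + s) w0) PU)).
  move=> eps eps0.
  have hb : bounded_subset [set w0] by exists `|w0| => x ->.
  have hn : Defs.set_nbhs A [set y | exists2 k, A k & ball k eps y].
    rewrite /Defs.set_nbhs; exists [set y | exists2 k, A k & ball k eps y]; split; [|split => //].
      by apply: bigcup_open => k _; exact: ball_open.
    by move=> k Ak; exists k => //; exact: ballxx.
  have [T0 hT0] := attr _ _ hb hn.
  suff : U [set t | exists2 k, A k & ball k eps (S (t + s) w0)] by [].
  apply: filterS (Ushift s T0) => t /= ht.
  by apply: (hT0 (t + s) (ltW ht)); exists w0.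
have contS : forall tau, 0 <= tau -> continuous (S tau).
  move=> tau tau0 x; apply/cvgrPdist_lt => eps eps0.
  have [d d0 hd] := Sc x tau eps tau0 eps0.
  apply/nbhs_ballP; exists d => // y; rewrite -ball_normE /= => hy.
  by apply: hd => //; rewrite tau0 lexx.
have [ub hub] := choice (conv u0).
have [vb hvb] := choice (conv v0).
have traj : forall w0 (wb : R -> H),
    (forall s, A (wb s) /\ (fun t => S (t + s) w0) @ U --> wb s) ->
    complete_traj S A wb.
  move=> w0 wb hw; split; first by move=> s; case: (hw s).
  move=> s tau tau0.
  have c1 : (S tau \o (fun t => S (t + s) w0)) @ U --> S tau (wb s).
    exact: cvg_comp (hw s).2 (contS tau tau0 (wb s)).
  have c2 : (S tau \o (fun t => S (t + s) w0)) @ U --> wb (tau + s).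
    apply: cvg_trans (hw (tau + s)).2; apply: near_eq_cvg.
    apply: filterS (Ushift s 0) => t /= ht.
    by rewrite -Ssg // ?ltW //; congr S; rewrite addrCA addrA.
  exact: (cvg_unique _ c1 c2).
have Feq : forall t i, F i (ub t) = F i (vb t).
  move=> s i; apply/eqP; rewrite -subr_eq0; apply/eqP.
  have c1 : (fun t => F i (S (t + s) u0) - F i (S (t + s) v0)) @ U -->
      F i (ub s) - F i (vb s).
    apply: cvgB.
      exact: cvg_comp (hub s).2 (Fc i (ub s)).
    exact: cvg_comp (hvb s).2 (Fc i (vb s)).
  have shc : (fun t => t + s) @ U --> +oo.
    move=> P [M [_ hM]]; suff : U [set t | P (t + s)] by [].
    by apply: filterS (Ushift s M) => t /= ht; exact: hM.
  have c2 : (fun t => F i (S (t + s) u0) - F i (S (t + s) v0)) @ U --> 0.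
    exact: cvg_comp shc (hF i).
  exact: (cvg_unique _ c1 c2).
have eqb := sep ub vb (traj u0 ub hub) (traj v0 vb hvb) Feq.
have c0 : (fun t => S (t + 0) u0 - S (t + 0) v0) @ U --> 0.
  by rewrite -(subrr (ub 0)) {2}eqb; apply: cvgB; [exact: (hub 0).2 | exact: (hvb 0).2].
have hlt : \forall t \near U, `|S (t + 0) u0 - S (t + 0) v0| < e.
  exact: (cvgr0_norm_lt _ c0 e e0).
have [t [ht1 [_ ht2]]] := filter_ex (filterI hlt (G0U _ (ex_intro2 _ _ 0 I (fun x h => h)))).
by move: ht1; rewrite /= addr0 ltNge ht2.
Qed.
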